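(* Let $\mathcal L$ be a finite distributive lattice and $\mathcal I$ a poset ideal (respectively a poset coideal) of $\mathcal L$. Then the minimal free resolution of $H_{\mathcal I}$ is linear.
   Context: Let $P$ be the set of join-irreducible elements of $\mathcal L$ (elements with exactly one lower neighbor), with the induced order; for $p\in\mathcal L$ put $\ell(p)=\{q\in P:q\le p\}$. Let $K$ be a field and $S=K[x_p,y_p: p\in P]$ with all variables of degree 1. For $q\in\mathcal L$ put $u_q=\prod_{p\in\ell(q)}x_p\prod_{p\in P\setminus\ell(q)}y_p$, and for $\mathcal S\subseteq\mathcal L$ let $H_{\mathcal S}$ be the ideal generated by $\{u_q:q\in\mathcal S\}$. Poset ideals are closed downward, poset coideals upward. A minimal graded free resolution of an ideal is linear if all minimal generators have a common degree $d$ and the $i$-th free module is generated in degree $d+i$ for all $i$. *)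

(* Defs.v *)
From HB Require Import structures.
From mathcomp Require Import all_boot all_order all_algebra.
From mathcomp Require Import mpoly.
Set Implicit Arguments. Unset Strict Implicit. Unset Printing Implicit Defensive.
Import Order.TTheory GRing.Theory.
Local Open Scope ring_scope.

Section Hibi.
Context {disp : Order.disp_t} (L : finTBDistrLatticeType disp).

Definition lower_nb (q p : L) : bool :=
  (q < p)%O && [forall r : L, ~~ ((q < r)%O && (r < p)%O)].

Definition join_irr (p : L) : bool := #|[set q : L | lower_nb q p]| == 1%N.

Definition JI : finType := {p : L | join_irr p}.

Definition nJI : nat := #|{: JI}|.

(** the ring S = K[x_p, y_p : p in P]: variables indexed by 'I_(nJI + nJI),
    the first nJI are the x_p, the last nJI are the y_p. *)
Definition Sring (K : fieldType) := {mpoly K[nJI + nJI]}.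

Definition xv (K : fieldType) (p : JI) : Sring K := 'X_(lshift nJI (enum_rank p)).
Definition yv (K : fieldType) (p : JI) : Sring K := 'X_(rshift nJI (enum_rank p)).

Definition u_mon (K : fieldType) (q : L) : Sring K :=
  (\prod_(p : JI | (val p <= q)%O) xv K p) *
  (\prod_(p : JI | ~~ (val p <= q)%O) yv K p).

Definition in_H (K : fieldType) (S : {set L}) (f : Sring K) : Prop :=
  exists c : L -> Sring K, f = \sum_(q in S) c q * u_mon K q.

Definition poset_ideal (I : {set L}) : Prop :=
  forall x y : L, (y <= x)%O -> x \in I -> y \in I.
Definition poset_coideal (I : {set L}) : Prop :=
  forall x y : L, (x <= y)%O -> x \in I -> y \in I.

End Hibi.
Arguments in_H {disp L} K S f.
Arguments u_mon {disp L} K q.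

Section Resolutions.
Context (K : fieldType) (n : nat).
Local Notation S := {mpoly K[n]}.

Definition homog_of (e : nat) (f : S) : bool := f \is ishomog1 e (@mdeg n).

(** A graded free resolution of the ideal J (given as a membership predicate)
      ... -> F_2 --d 1--> F_1 --d 0--> F_0 --eps--> J -> 0
    with F_i = (+)_{k < b i} S(-a i k), elements of F_i being row vectors
    'rV_(b i) and maps acting by right multiplication.  The sequence is
    indexed by all naturals (finite resolutions having b i = 0 eventually). *)
Record graded_free_res (J : S -> Prop) := GFR {
  gb : nat -> nat;
  ga : forall i, 'I_(gb i) -> nat;
  geps : 'M[S]_(gb 0, 1);
  gd : forall i, 'M[S]_(gb i.+1, gb i);
  geps_homog : forall k, homog_of (ga k) (geps k ord0);
  gd_homog : forall i k l, gd i k l = 0 \/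
     ((ga l <= ga k)%N /\ homog_of (ga k - ga l) (gd i k l));
  geps_onto : forall f, J f <-> exists v : 'rV[S]_(gb 0), f = (v *m geps) ord0 ord0;
  gexact0 : forall v : 'rV[S]_(gb 0),
     v *m geps = 0 <-> exists w : 'rV[S]_(gb 1), v = w *m gd 0;
  gexactS : forall i (v : 'rV[S]_(gb i.+1)),
     v *m gd i = 0 <-> exists w : 'rV[S]_(gb i.+2), v = w *m gd i.+1
}.

Definition minimal_res J (F : graded_free_res J) : Prop :=
  forall i k l, (gd F i k l)@_0%MM = 0.

Definition linear_res J (F : graded_free_res J) : Prop :=
  exists d : nat, forall i (k : 'I_(gb F i)), ga k = (d + i)%N.

(** The minimal graded free resolution of J is linear (minimal graded free
    resolutions being unique up to isomorphism, this is the existence of a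
    linear one). *)
Definition has_linear_min_res (J : S -> Prop) : Prop :=
  exists F : graded_free_res J, minimal_res F /\ linear_res F.

End Resolutions.

(* Main.v *)
Require Import Defs.
From HB Require Import structures.
From mathcomp Require Import all_boot all_order all_algebra.
From mathcomp Require Import mpoly.
From mathcomp Require Import ring.

Module HCore.
Set Implicit Arguments. Unset Strict Implicit. Unset Printing Implicit Defensive.
Import Order.TTheory GRing.Theory.
Local Open Scope ring_scope.
Section Core.
Variables (R : comRingType) (P : finType) (F : {set {set P}}) (x y : P -> R).

Definition cell := ({set P} * {set P})%type.
Definition rk (t : P) : nat := enum_rank t.
Definition cnt (t : P) (T : {set P}) := #|[set s in T | (rk s < rk t)%N]|.
Definition sg t T : R := (-1) ^+ cnt t T.
Definition bd (c c' : cell) : R :=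
  \sum_(t in c.2) sg t c.2 * ((if c' == (c.1, c.2 :\ t) then y t else 0)
                              - (if c' == (c.1 :\ t, c.2 :\ t) then x t else 0)).

Lemma sum_if_eq (T : finType) (a : T) (g : R) (f : T -> R) :
  \sum_(c : T) (if c == a then g else 0) * f c = g * f a.
Proof.
rewrite (bigD1 a) //= eqxx big1 ?addr0 // => c /negbTE ->; by rewrite mul0r.
Qed.

Lemma face_sum (c : cell) (f : cell -> R) :
  \sum_c' bd c c' * f c' = \sum_(t in c.2) sg t c.2 *
      (y t * f (c.1, c.2 :\ t) - x t * f (c.1 :\ t, c.2 :\ t)).
Proof.
rewrite /bd; under eq_bigr do rewrite mulr_suml.
rewrite exchange_big; apply: eq_bigr => t _.
under eq_bigr do rewrite -mulrA mulrBl.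
by rewrite -mulr_sumr sumrB !sum_if_eq.
Qed.

Lemma rk_inj : injective rk.
Proof. by move=> a b /eqP; rewrite /rk (inj_eq (@ord_inj _)) => /eqP/enum_rank_inj. Qed.

Lemma cntD1 t s T : cnt t T = (((s \in T) && (rk s < rk t)) + cnt t (T :\ s))%N.
Proof.
rewrite /cnt (cardsD1 s); congr (_ + _)%N; first by rewrite inE.
by apply: eq_card => z; rewrite !inE andbA.
Qed.

Lemma sg_anti_lt t s (T : {set P}) : t \in T -> s \in T -> (rk s < rk t)%N ->
  sg t T * sg s (T :\ t) = - (sg s T * sg t (T :\ s)).
Proof.
move=> tT sT lst; rewrite /sg (cntD1 t s) (cntD1 s t T) sT tT lst /=.
rewrite ltnNge (ltnW lst) /= add0n add1n exprS.
by rewrite mulN1r mulNr mulrC.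
Qed.

Lemma sg_anti t s (T : {set P}) : t \in T -> s \in T -> t != s ->
  sg t T * sg s (T :\ t) = - (sg s T * sg t (T :\ s)).
Proof.
move=> tT sT nts; case: (ltngtP (rk s) (rk t)) => h.
- exact: sg_anti_lt.
- by rewrite (sg_anti_lt sT tT h) opprK.
- by move/rk_inj: h => h; rewrite h eqxx in nts.
Qed.

Lemma sum_antisym (T : {set P}) (G : P -> P -> R) :
  (forall t s, t \in T -> s \in T -> t != s -> G t s = - G s t) ->
  \sum_(t in T) \sum_(s in T :\ t) G t s = 0.
Proof.
move=> hG.
have split1 : forall t, t \in T -> \sum_(s in T :\ t) G t s =
   \sum_(s in T | (rk s < rk t)%N) G t s + \sum_(s in T | (rk t < rk s)%N) G t s.
  move=> t tT; rewrite (bigID (fun s => (rk s < rk t)%N)) /=; congr (_ + _).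
    apply: eq_bigl => s; rewrite !inE; case: (eqVneq s t) => [->|_].
      by rewrite ltnn !andbF.
    by [].
  apply: eq_bigl => s; rewrite !inE; case: (eqVneq s t) => [->|ns].
    by rewrite ltnn !andbF.
  by rewrite -leqNgt ltn_neqAle (inj_eq rk_inj) eq_sym ns.
rewrite (eq_bigr _ split1) big_split /=.
set S1 := (X in X + _).
suff -> : \sum_(i in T) \sum_(s in T | (rk i < rk s)%N) G i s = - S1 by rewrite subrr.
rewrite /S1 -sumrN.
rewrite (exchange_big_dep (fun s => s \in T)) /=; last by move=> i j _ /andP[].
apply: eq_bigr => s sT; rewrite -sumrN; apply: eq_big => t.
  by rewrite sT.
by move=> /andP[tT] /andP[_ hlt]; apply: hG => //; rewrite -(inj_eq rk_inj) neq_ltn hlt.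
Qed.

Lemma setD1C (A : {set P}) a b : A :\ a :\ b = A :\ b :\ a.
Proof. by apply/setP => z; rewrite !inE !andbA [(z != b) && _]andbC. Qed.

Lemma ifz (b : bool) (a : R) : (if b then a else 0) = (b%:R) * a.
Proof. by case: b; rewrite ?mul1r ?mul0r. Qed.

Lemma bd_bd (c c'' : cell) : \sum_c' bd c c' * bd c' c'' = 0.
Proof.
rewrite face_sum /=.
pose H t s := y t * ((if c'' == (c.1, c.2 :\ t :\ s) then y s else 0)
                    - (if c'' == (c.1 :\ s, c.2 :\ t :\ s) then x s else 0))
            - x t * ((if c'' == (c.1 :\ t, c.2 :\ t :\ s) then y s else 0)
                    - (if c'' == (c.1 :\ t :\ s, c.2 :\ t :\ s) then x s else 0)).
transitivity (\sum_(t in c.2) \sum_(s in c.2 :\ t)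
                 (sg t c.2 * sg s (c.2 :\ t)) * H t s).
  apply: eq_bigr => t _; rewrite /bd /= !mulr_sumr -sumrB mulr_sumr.
  by apply: eq_bigr => s _; rewrite /H; ring.
apply: sum_antisym => t s tT sT nts.
rewrite sg_anti // mulNr; congr (- (_ * _)).
rewrite /H (setD1C c.2 t s) (setD1C c.1 t s).
rewrite !ifz; ring.
Qed.

Lemma sum_pick (T : finType) (a : T) (g : T -> R) :
  \sum_(c : T) (if c == a then g c else 0) = g a.
Proof. by rewrite (bigD1 a) //= eqxx big1 ?addr0 // => c /negbTE ->. Qed.

Definition kd (T T' : {set P}) : R :=
  \sum_(t in T) sg t T * (if T' == T :\ t then y t else 0).
Definition dK (z : {set P} -> R) (T' : {set P}) : R := \sum_T z T * kd T T'.

Lemma dK_coface z T' :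
  dK z T' = \sum_(t | t \notin T') sg t (t |: T') * (y t * z (t |: T')).
Proof.
rewrite /dK /kd; under eq_bigr do rewrite mulr_sumr big_mkcond /=.
rewrite exchange_big [RHS]big_mkcond /=; apply: eq_bigr => t _.
transitivity (\sum_T (if T == t |: T' then
     (if t \notin T' then sg t T * (y t * z T) else 0) else 0)).
  apply: eq_bigr => T _.
  case tT: (t \in T); last first.
    by case: eqP => // eT; rewrite eT setU11 in tT.
  case: (eqVneq T' (T :\ t)) => [e|ne].
    by rewrite e setD1K // eqxx setD11 /=; ring.
  rewrite mulr0 mulr0; case: eqP => // eT; case: ifP => // tT'.
  by move: ne; rewrite eT setU1K ?eqxx.
rewrite (sum_pick (t |: T') (fun T => if t \notin T' then
   sg t T * (y t * z T) else 0)).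
by [].
Qed.

Lemma dK_ext f g T' : (forall T, f T = g T) -> dK f T' = dK g T'.
Proof. by move=> h; apply: eq_bigr => T _; rewrite h. Qed.

Lemma dK_add f g T' : dK (fun T => f T + g T) T' = dK f T' + dK g T'.
Proof. by rewrite /dK -big_split; apply: eq_bigr => T _; rewrite mulrDl. Qed.

Lemma dK_subs f g (a : R) T' :
  dK (fun T => f T - a * g T) T' = dK f T' - a * dK g T'.
Proof.
rewrite /dK mulr_sumr -sumrB; apply: eq_bigr => T _; rewrite mulrBl mulrA.
by [].
Qed.

Lemma dK0 T' : dK (fun _ => 0) T' = 0.
Proof. by rewrite /dK big1 // => T _; rewrite mul0r. Qed.

Section KoszulStep.
Variables (M : {set P}) (m : P).
Hypothesis mM : m \in M.
Hypothesis mmax : forall t, t \in M -> (rk t <= rk m)%N.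
Let M' := M :\ m.

Lemma S1 (T : {set P}) : T \subset M' -> sg m (m |: T) = (-1) ^+ #|T|.
Proof.
move=> sub; rewrite /sg /cnt; congr (_ ^+ _); apply: eq_card => s.
rewrite !inE; case: (eqVneq s m) => [->|nsm] /=.
  rewrite ltnn; apply/esym/negbTE; apply/negP => h.
  by have := subsetP sub m h; rewrite setD11.
case sT: (s \in T) => //=.
rewrite ltn_neqAle (inj_eq rk_inj) nsm /=; apply: mmax.
by have := subsetP sub s sT; rewrite inE => /andP[].
Qed.

Lemma S2 t (T : {set P}) : t \in M -> sg t (m |: T) = sg t T.
Proof.
move=> tM; rewrite /sg /cnt; congr (_ ^+ _); apply: eq_card => s.
rewrite !inE; case: (eqVneq s m) => [->|] //=.
by rewrite ltnNge mmax // andbF; case: (m \in T).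
Qed.

Lemma cof_shift (g h : {set P} -> R) (T0 : {set P}) : T0 \subset M' ->
  (forall t, t \notin M -> h (t |: T0) = 0) -> h (m |: T0) = 0 ->
  (forall t, t != m -> t \notin T0 -> g (t |: (m |: T0)) = h (t |: T0)) ->
  dK g (m |: T0) = dK h T0.
Proof.
move=> sub h0 hm hgh.
have mT0 : m \notin T0 by apply: contraTN isT => hh; move/subsetP: sub => /(_ m hh); rewrite setD11.
rewrite !dK_coface [RHS](bigD1 m) //= hm mulr0 mulr0 add0r.
apply: eq_big => t; first by rewrite !inE negb_or andbC.
rewrite !inE negb_or => /andP[ntm tT0].
rewrite hgh //; case tM: (t \in M).
  by rewrite setUCA S2.
by rewrite h0 ?tM // !mulr0.
Qed.

End KoszulStep.


Lemma sum_pick_in (T : finType) (A : {pred T}) (a : T) (g : T -> R) :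
  \sum_(c in A) (if c == a then g c else 0) = if a \in A then g a else 0.
Proof.
rewrite big_mkcond /= -(sum_pick a (fun c => if c \in A then g c else 0)).
by apply: eq_bigr => c _; case: (c \in A); case: eqP => // ->.
Qed.

Definition NZDy := forall (M : {set P}) m b, m \notin M ->
  (exists c : P -> R, y m * b = \sum_(t in M) c t * y t) ->
  exists c : P -> R, b = \sum_(t in M) c t * y t.

Lemma sg1 t : sg t [set t] = 1.
Proof.
rewrite /sg /cnt (_ : [set s in [set t] | _] = set0) ?cards0 ?expr0 //.
by apply/setP => s; rewrite !inE; case: eqP => // ->; rewrite ltnn.
Qed.

Lemma dK_set0 z : dK z set0 = \sum_t y t * z [set t].
Proof.
rewrite dK_coface; apply: eq_big => t; first by rewrite inE.
by move=> _; rewrite setU0 sg1 mul1r.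
Qed.

Lemma notin_sub (A B : {set P}) a : A \subset B -> a \notin B -> a \notin A.
Proof. by move=> sub; apply: contra => /(subsetP sub). Qed.

Lemma koszul (NZD : NZDy) : forall n (M : {set P}), (#|M| <= n)%N ->
  forall k (z : {set P} -> R),
  (forall T : {set P}, ~~ ((T \subset M) && (#|T| == k.+1)) -> z T = 0) ->
  (forall T' : {set P}, T' \subset M -> #|T'| = k -> dK z T' = 0) ->
  exists w : {set P} -> R,
    (forall T : {set P}, ~~ ((T \subset M) && (#|T| == k.+2)) -> w T = 0) /\
    (forall T' : {set P}, T' \subset M -> #|T'| = k.+1 -> z T' = dK w T').
Proof.
have triv : forall (M : {set P}) k (z : {set P} -> R), M = set0 ->
   exists w : {set P} -> R,
    (forall T : {set P}, ~~ ((T \subset M) && (#|T| == k.+2)) -> w T = 0) /\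
    (forall T' : {set P}, T' \subset M -> #|T'| = k.+1 -> z T' = dK w T').
  move=> M k z ->; exists (fun _ => 0); split => // T'.
  by rewrite subset0 => /eqP ->; rewrite cards0.
elim=> [|n IH] M hM k z hz hc.
  by apply: triv; apply: cards0_eq; apply/eqP; rewrite -leqn0.
have [M0|[m0 m0M]] := set_0Vmem M; first exact: triv.
case: (@arg_maxnP P m0 (mem M) rk m0M) => m mM mmax.
have mmax' : forall t, t \in M -> (rk t <= rk m)%N by move=> t /mmax.
have {}mM : m \in M by [].
set M' := M :\ m.
have mM' : m \notin M' by rewrite setD11.
have M'M : M' \subset M by apply: subsetDl.
have hM' : (#|M'| <= n)%N.
  by move: hM; rewrite (cardsD1 m M) mM add1n ltnS.
have subM' : forall T : {set P}, T \subset M -> m \notin T -> T \subset M'.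
  by move=> T sub mT; rewrite subsetD1 sub.
pose b := fun T : {set P} => if m \in T then 0 else z (m |: T).
pose z0 := fun T : {set P} => if m \in T then 0 else z T.
have hb : forall T : {set P}, ~~ ((T \subset M') && (#|T| == k)) -> b T = 0.
  move=> T; rewrite /b; case: ifP => // mT h; apply: hz; apply: contra h.
  case/andP => sub /eqP c; rewrite subM' //; last by rewrite mT.
    by rewrite /= -eqSS -c cardsU1 mT.
  by apply: subset_trans sub; apply: subsetUr.
have hz0 : forall T : {set P}, ~~ ((T \subset M') && (#|T| == k.+1)) -> z0 T = 0.
  move=> T; rewrite /z0; case: ifP => // mT h; apply: hz; apply: contra h.
  by case/andP => sub c; rewrite subM' ?mT.
have F2 : forall T' : {set P}, T' \subset M' -> #|T'| = k ->
    dK z T' = dK z0 T' + (-1) ^+ k * (y m * b T').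
  move=> T' sub c; have mT' : m \notin T' := notin_sub sub mM'.
  rewrite !dK_coface (bigD1 m) //= [X in _ = X + _](bigD1 m) //=.
  rewrite /z0 setU11 mulr0 mulr0 add0r (S1 mmax' sub) c /b (negbTE mT') addrC.
  congr (_ + _); apply: eq_bigr => t /andP[_ ntm].
  by rewrite in_setU1 eq_sym (negbTE ntm) (negbTE mT').
have [cc [hcc1 hcc2]] : exists cc : {set P} -> R,
    (forall T : {set P}, ~~ ((T \subset M') && (#|T| == k.+1)) -> cc T = 0) /\
    (forall T' : {set P}, T' \subset M' -> #|T'| = k -> b T' = dK cc T').
  case: k hz hc hb hz0 F2 => [|k'] hz hc hb hz0 F2.
    have := F2 set0 (sub0set _) (cards0 _).
    rewrite (hc set0 (sub0set _) (cards0 _)) expr0 mul1r dK_set0 => e.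
    have [c' hc'] : exists c' : P -> R, b set0 = \sum_(t in M') c' t * y t.
      apply: (NZD M' m) => //; exists (fun t => - z0 [set t]).
      have e2 : \sum_(t in M') - z0 [set t] * y t = - \sum_t y t * z0 [set t].
        rewrite -sumrN big_mkcond; apply: eq_bigr => t _.
        case: ifP => tM'; first by rewrite mulNr mulrC.
        by rewrite hz0 ?mulr0 ?oppr0 // sub1set tM'.
      move/eqP: e; rewrite eq_sym addr_eq0 => /eqP e.
      by rewrite e2 e opprK.
    exists (fun T => \sum_(t in M') (if T == [set t] then c' t else 0)); split.
      move=> T h; apply: big1 => t tM'; case: eqP => // eT; move: h.
      by rewrite eT sub1set tM' cards1.
    move=> T' sub /cards0_eq ->; rewrite dK_set0 hc' [LHS]big_mkcond /=.
    apply: eq_bigr => t _.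
    rewrite (eq_bigr (fun t' => if t' == t then c' t' else 0)); last first.
      by move=> t' _; rewrite (inj_eq set1_inj) eq_sym.
    by rewrite sum_pick_in; case: ifP => _; rewrite ?mulr0 // mulrC.
  have F3 : forall T' : {set P}, T' \subset M' -> #|T'| = k' -> dK b T' = 0.
    move=> T' sub c; have mT' : m \notin T' := notin_sub sub mM'.
    rewrite -(cof_shift mmax' (g := z)) //.
    - apply: hc; first by rewrite subUset sub1set mM (subset_trans sub).
      by rewrite cardsU1 mT' c.
    - move=> t tM; rewrite /b; case: ifP => // _; apply: hz.
      rewrite negb_and; apply/orP; left; apply: contra tM => /subsetP; apply.
      by rewrite !inE eqxx orbT.
    - by rewrite /b setU11.
    - move=> t ntm tT'; rewrite /b in_setU1 eq_sym (negbTE ntm) (negbTE mT') /=.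
      by rewrite setUCA.
  have [cc [hcc1 hcc2]] := IH M' hM' k' b hb F3.
  by exists cc.
pose W := fun T : {set P} => if m \in T then cc (T :\ m) else 0.
have hW : forall T : {set P}, ~~ ((T \subset M) && (#|T| == k.+2)) -> W T = 0.
  move=> T; rewrite /W; case: ifP => // mT h; apply: hcc1; apply: contra h.
  case/andP => sub /eqP c; apply/andP; split.
    by rewrite -(setD1K mT) subUset sub1set mM (subset_trans sub M'M).
  by rewrite (cardsD1 m) mT c.
have F4 : forall T0 : {set P}, T0 \subset M' -> #|T0| = k -> dK W (m |: T0) = z (m |: T0).
  move=> T0 sub c; have mT0 : m \notin T0 := notin_sub sub mM'.
  rewrite (cof_shift mmax' (h := cc)) //.
  - by rewrite -hcc2 // /b (negbTE mT0).
  - move=> t tM; apply: hcc1; rewrite negb_and; apply/orP; left.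
    apply: contra tM => /subsetP h; apply: (subsetP M'M); apply: h.
    by rewrite !inE eqxx.
  - apply: hcc1; rewrite negb_and; apply/orP; left.
    by apply: contra mM' => /subsetP; apply; rewrite !inE eqxx.
  - move=> t ntm tT0; rewrite /W !inE eqxx orbT; congr cc.
    apply/setP => s; rewrite !inE; case: (eqVneq s m) => [->|nsm] /=.
      by rewrite eq_sym (negbTE ntm) (negbTE mT0).
    by [].
have F5 : forall T' : {set P}, T' \subset M' -> #|T'| = k.+1 ->
    dK W T' = (-1) ^+ k.+1 * (y m * cc T').
  move=> T' sub c; have mT' : m \notin T' := notin_sub sub mM'.
  rewrite dK_coface (bigD1 m) //= big1 ?addr0.
    by rewrite (S1 mmax' sub) c /W setU11 setU1K.
  move=> t /andP[_ ntm]; rewrite /W in_setU1 eq_sym (negbTE ntm) (negbTE mT').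
  by rewrite !mulr0.
pose z2 := fun T : {set P} => z0 T - (-1) ^+ k.+1 * (y m * cc T).
have hz2 : forall T : {set P}, ~~ ((T \subset M') && (#|T| == k.+1)) -> z2 T = 0.
  by move=> T h; rewrite /z2 hz0 // hcc1 // mulr0 mulr0 subr0.
have hc2 : forall T' : {set P}, T' \subset M' -> #|T'| = k -> dK z2 T' = 0.
  move=> T' sub c.
  rewrite /z2 (dK_subs z0 (fun T => y m * cc T)).
  rewrite (_ : dK (fun T => y m * cc T) T' = y m * dK cc T'); last first.
    by rewrite /dK mulr_sumr; apply: eq_bigr => T _; rewrite mulrA.
  have := F2 T' sub c; rewrite hc ?(subset_trans sub M'M) // -hcc2 //.
  move/eqP; rewrite eq_sym addr_eq0 => /eqP ->; rewrite exprS; ring.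
have [e [he1 he2]] := IH M' hM' k z2 hz2 hc2.
exists (fun T => W T + e T); split.
  move=> T h; rewrite hW // he1 ?addr0 //; apply: contra h.
  by case/andP => sub ->; rewrite (subset_trans sub M'M).
move=> T' sub c; rewrite dK_add.
case mT': (m \in T').
  have sub0 : T' :\ m \subset M' by apply: setSD.
  have c0 : #|T' :\ m| = k by move: c; rewrite (cardsD1 m) mT' add1n => -[].
  rewrite -(setD1K mT') F4 // dK_coface big1 ?addr0 // => t _.
  rewrite he1 ?mulr0 ?mulr0 //; rewrite negb_and; apply/orP; left.
  by apply: contra mM' => /subsetP; apply; rewrite !inE eqxx orbT.
have sub' : T' \subset M' by rewrite subM' ?mT'.
rewrite F5 // -he2 // /z2 /z0 mT'; ring.
Qed.

Variable u : {set P} -> R.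
Implicit Types (v w : cell -> R) (c : cell) (A B T : {set P}) (I : {set {set P}}).

Definition rem (A : {set P}) := [set t in A | A :\ t \in F].
Definition valid (I : {set {set P}}) (c : cell) := (c.1 \in I) && (c.2 \subset rem c.1).
Definition cellset I k := [set c : cell | valid I c && (#|c.2| == k)].
Definition dclosed (I : {set {set P}}) := (I \subset F) /\
  forall A B, A \in I -> B \in F -> B \subset A -> B \in I.
Definition supp_in (S : {set cell}) (v : cell -> R) := forall c, c \notin S -> v c = 0.
Definition bdv (v : cell -> R) (c' : cell) := \sum_c v c * bd c c'.
Definition aug (v : cell -> R) := \sum_c v c * u c.1.
Definition colonH := forall I, dclosed I -> forall A, A \in I ->
  (forall B, B \in I -> A \subset B -> B = A) ->
  forall a, (exists c : {set P} -> R, a * u A = \sum_(B in I :\ A) c B * u B) ->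
  exists c : P -> R, a = \sum_(t in rem A) c t * y t.

Lemma sum_cell (f : cell -> R) : \sum_c f c = \sum_B \sum_T f (B, T).
Proof. by rewrite pair_bigA; apply: eq_bigr => -[B T]. Qed.

Lemma bd_nz_face c c' : bd c c' != 0 ->
  exists2 t, t \in c.2 & (c' = (c.1, c.2 :\ t) \/ c' = (c.1 :\ t, c.2 :\ t)).
Proof.
move=> h.
case: (boolP [exists t, (t \in c.2) &&
    ((c' == (c.1, c.2 :\ t)) || (c' == (c.1 :\ t, c.2 :\ t)))]).
  by case/existsP => t /andP[tT /orP[/eqP e|/eqP e]]; exists t => //; [left|right].
move/existsPn => nex; move: h; rewrite /bd big1 ?eqxx // => t tT.
have := nex t; rewrite tT /= negb_or => /andP[/negbTE -> /negbTE ->].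
by rewrite subrr mulr0.
Qed.

Hypothesis Fcap : forall A B, A \in F -> B \in F -> A :&: B \in F.

Lemma remP A t : (t \in rem A) = (t \in A) && (A :\ t \in F).
Proof. by rewrite inE. Qed.

Lemma rem_sub A : rem A \subset A.
Proof. by apply/subsetP => t; rewrite remP => /andP[]. Qed.

Lemma face_valid I k c c' : dclosed I -> c \in cellset I k.+1 -> bd c c' != 0 ->
  c' \in cellset I k.
Proof.
case: c => A T [IF Icl]; rewrite inE /valid /= => /andP[/andP[AI sub] /eqP cT].
case/bd_nz_face => t /= tT [->|->]; rewrite inE /valid /=.
  rewrite AI (subset_trans (subD1set T t) sub) /=.
  by move: cT; rewrite (cardsD1 t) tT add1n => -[->].
have := subsetP sub t tT; rewrite remP => /andP[tA AtF].
have AtI : A :\ t \in I by apply: Icl AI AtF (subD1set A t).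
rewrite AtI /=; apply/andP; split; last first.
  by move: cT; rewrite (cardsD1 t) tT add1n => -[->].
apply/subsetP => s; rewrite inE => /andP[nst sT].
have := subsetP sub s sT; rewrite !remP => /andP[sA AsF].
rewrite inE nst sA /=.
have -> : A :\ t :\ s = (A :\ t) :&: (A :\ s).
  by apply/setP => z; rewrite !inE; case: (z == s); case: (z == t); case: (z \in A).
by apply: Fcap => //; apply: (subsetP IF).
Qed.

Lemma bdv_supp I k w : dclosed I -> supp_in (cellset I k.+1) w ->
  supp_in (cellset I k) (bdv w).
Proof.
move=> dI hw c' nc'; apply: big1 => c _.
case cS: (c \in cellset I k.+1); last by rewrite hw ?cS // mul0r.
case: (eqVneq (bd c c') 0) => [->|nz]; first by rewrite mulr0.
by have := face_valid dI cS nz; rewrite (negbTE nc').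
Qed.

Lemma bdv_bdv w c'' : bdv (bdv w) c'' = 0.
Proof.
rewrite /bdv; under eq_bigr do rewrite mulr_suml.
rewrite exchange_big big1 // => c _.
transitivity (w c * \sum_c' bd c c' * bd c' c''); last by rewrite bd_bd mulr0.
by rewrite mulr_sumr; apply: eq_bigr => c' _; rewrite mulrA.
Qed.

Lemma bdv_ext v w c' : (forall c, v c = w c) -> bdv v c' = bdv w c'.
Proof. by move=> h; apply: eq_bigr => c _; rewrite h. Qed.

Lemma bdv_add v w c' : bdv (fun c => v c + w c) c' = bdv v c' + bdv w c'.
Proof. by rewrite /bdv -big_split; apply: eq_bigr => c _; rewrite mulrDl. Qed.

Lemma bdv_sub v w c' : bdv (fun c => v c - w c) c' = bdv v c' - bdv w c'.
Proof. by rewrite /bdv -sumrB; apply: eq_bigr => c _; rewrite mulrBl. Qed.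

Lemma bdv0 c' : bdv (fun _ => 0) c' = 0.
Proof. by apply: big1 => c _; rewrite mul0r. Qed.

Hypothesis uxy : forall (A : {set P}) t, t \in A -> y t * u A = x t * u (A :\ t).

Lemma aug_bdv w : (forall c, w c != 0 -> c.2 \subset c.1) -> aug (bdv w) = 0.
Proof.
move=> hw; rewrite /aug /bdv; under eq_bigr do rewrite mulr_suml.
rewrite exchange_big big1 // => c _.
case: (eqVneq (w c) 0) => [w0|nz].
  by apply: big1 => c' _; rewrite w0 !mul0r.
transitivity (w c * \sum_c' bd c c' * u c'.1).
  by rewrite mulr_sumr; apply: eq_bigr => c' _; rewrite mulrA.
rewrite face_sum big1 ?mulr0 // => t tT /=.
by rewrite uxy ?subrr ?mulr0 // (subsetP (hw c nz)).
Qed.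

Lemma aug_ext v w : (forall c, v c = w c) -> aug v = aug w.
Proof. by move=> h; apply: eq_bigr => c _; rewrite h. Qed.

Lemma aug_sub v w : aug (fun c => v c - w c) = aug v - aug w.
Proof. by rewrite /aug -sumrB; apply: eq_bigr => c _; rewrite mulrBl. Qed.

Lemma bd_kd A T T' : T \subset A -> bd (A, T) (A, T') = kd T T'.
Proof.
move=> sub; apply: eq_bigr => t tT /=.
rewrite !xpair_eqE eqxx /=.
have -> : (A == A :\ t) = false.
  apply/negbTE; apply/eqP => e.
  by have := subsetP sub t tT; rewrite {1}e setD11.
by rewrite /= subr0.
Qed.

Lemma top_split I j A v T' : dclosed I -> A \in I ->
  (forall B, B \in I -> A \subset B -> B = A) ->
  supp_in (cellset I j) v ->
  bdv v (A, T') = dK (fun T => v (A, T)) T'.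
Proof.
move=> dI AI Amax hv; rewrite /bdv sum_cell (bigD1 A) //= [X in _ + X]big1 ?addr0.
  apply: eq_bigr => T _.
  case cS: ((A, T) \in cellset I j); last by rewrite hv ?cS // !mul0r.
  move: cS; rewrite inE /valid /= => /andP[/andP[_ sub] _].
  by rewrite bd_kd // (subset_trans sub) // rem_sub.
move=> B nBA; apply: big1 => T _.
case cS: ((B, T) \in cellset I j); last by rewrite hv ?cS // mul0r.
case: (eqVneq (bd (B, T) (A, T')) 0) => [->|nz]; first by rewrite mulr0.
case/bd_nz_face: nz => t /= _ [[e _]|[e _]].
  by rewrite e eqxx in nBA.
move: cS; rewrite inE /valid /= => /andP[/andP[BI _] _].
have eB : B = A by apply: Amax BI _; rewrite e subD1set.
by rewrite eB eqxx in nBA.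
Qed.

Lemma pick_max I : I != set0 ->
  exists2 A, A \in I & forall B, B \in I -> A \subset B -> B = A.
Proof.
case/set0Pn => A0 A0I.
case: (@arg_maxnP _ A0 (mem I) (fun B : {set P} => #|B|) A0I) => A AI Amax.
exists A => // B BI sub; apply/eqP; rewrite eq_sym eqEcard sub /=; exact: Amax.
Qed.

Lemma dclosed_rem I A : dclosed I -> A \in I ->
  (forall B, B \in I -> A \subset B -> B = A) -> dclosed (I :\ A).
Proof.
move=> [IF Icl] AI Amax; split; first exact: subset_trans (subD1set I A) IF.
move=> A0 B; rewrite !inE => /andP[nA0 A0I] BF sub; rewrite (Icl A0) // andbT.
by apply/eqP => eB; move: nA0; rewrite (Amax A0) ?eqxx // -eB.
Qed.

Lemma cellset_sub I A j : cellset (I :\ A) j \subset cellset I j.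
Proof.
by apply/subsetP => c; rewrite !inE /valid !inE -!andbA => /and3P[_ -> ->].
Qed.

Lemma cellset_notA I A j c : c \in cellset I j -> c.1 != A -> c \in cellset (I :\ A) j.
Proof. by rewrite !inE /valid !inE => /andP[/andP[-> ->] ->] ->. Qed.

Lemma triv_res I j v : I = set0 -> supp_in (cellset I j) v ->
  exists w, supp_in (cellset I j.+1) w /\ forall c', v c' = bdv w c'.
Proof.
move=> I0 hv; exists (fun _ => 0); split => // c'; rewrite bdv0; apply: hv.
by rewrite inE /valid I0 in_set0.
Qed.

Lemma exact_pos (NZD : NZDy) : forall n I, (#|I| <= n)%N -> dclosed I ->
  forall k v, supp_in (cellset I k.+1) v ->
  (forall c', c' \in cellset I k -> bdv v c' = 0) ->
  exists w, supp_in (cellset I k.+2) w /\ forall c', v c' = bdv w c'.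
Proof.
elim=> [|n IH] I hI dI k v hv hc.
  by apply: triv_res hv; apply: cards0_eq; apply/eqP; rewrite -leqn0.
have [I0|nI0] := eqVneq I set0; first exact: triv_res hv.
have [A AI Amax] := pick_max nI0.
have dI' := dclosed_rem dI AI Amax.
have hI' : (#|I :\ A| <= n)%N by move: hI; rewrite (cardsD1 A) AI.
pose z := fun T => v (A, T).
have hz : forall T, ~~ ((T \subset rem A) && (#|T| == k.+1)) -> z T = 0.
  by move=> T h; apply: hv; rewrite inE /valid /= AI.
have hcz : forall T', T' \subset rem A -> #|T'| = k -> dK z T' = 0.
  move=> T' sub c; rewrite -(top_split _ dI AI Amax hv) hc //.
  by rewrite inE /valid /= AI sub c eqxx.
have [wK [hw1 hw2]] := koszul NZD (leqnn #|rem A|) hz hcz.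
pose wA := fun c : cell => if c.1 == A then wK c.2 else 0.
have hwA : supp_in (cellset I k.+2) wA.
  move=> [B T]; rewrite /wA /=; case: eqP => // ->.
  by rewrite inE /valid /= AI => h; apply: hw1.
have bwA : forall T, bdv wA (A, T) = dK wK T.
  by move=> T; rewrite (top_split _ dI AI Amax hwA); apply: dK_ext => T0; rewrite /wA eqxx.
pose v' := fun c => v c - bdv wA c.
have hv' : supp_in (cellset (I :\ A) k.+1) v'.
  move=> c nc; case cS: (c \in cellset I k.+1); last first.
    by rewrite /v' hv ?cS // (bdv_supp dI hwA) ?cS // subrr.
  have c1A : c.1 = A.
    by apply/eqP; apply: contraNT nc => h; apply: cellset_notA.
  case: c c1A cS {nc} => B T /= ->; rewrite inE /valid /= => /andP[/andP[_ sub] /eqP c].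
  by rewrite /v' bwA -hw2 ?subrr.
have hc' : forall c', c' \in cellset (I :\ A) k -> bdv v' c' = 0.
  move=> c' cS; rewrite /v' bdv_sub bdv_bdv hc ?subr0 //.
  exact: (subsetP (cellset_sub I A k)).
have [w' [hw'1 hw'2]] := IH (I :\ A) hI' dI' k v' hv' hc'.
exists (fun c => wA c + w' c); split.
  move=> c nc; rewrite hwA // hw'1 ?add0r //; apply: contra nc.
  exact: (subsetP (cellset_sub I A _)).
by move=> c'; rewrite bdv_add -hw'2 /v' addrC subrK.
Qed.

Lemma aug_split I v : supp_in (cellset I 0%N) v ->
  aug v = \sum_(B in I) v (B, set0) * u B.
Proof.
move=> hv; rewrite /aug sum_cell [RHS]big_mkcond /=; apply: eq_bigr => B _.
rewrite (bigD1 set0) //= big1 ?addr0.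
  case: ifP => // BI; rewrite hv ?mul0r //.
  by rewrite inE /valid /= BI.
move=> T nT; rewrite hv ?mul0r // inE /valid /= negb_and; apply/orP; right.
by rewrite cards_eq0.
Qed.

Lemma exact_zero (HC : colonH) : forall n I, (#|I| <= n)%N -> dclosed I ->
  forall v, supp_in (cellset I 0%N) v -> aug v = 0 ->
  exists w, supp_in (cellset I 1%N) w /\ forall c', v c' = bdv w c'.
Proof.
elim=> [|n IH] I hI dI v hv hc.
  by apply: triv_res hv; apply: cards0_eq; apply/eqP; rewrite -leqn0.
have [I0|nI0] := eqVneq I set0; first exact: triv_res hv.
have [A AI Amax] := pick_max nI0.
have dI' := dclosed_rem dI AI Amax.
have hI' : (#|I :\ A| <= n)%N by move: hI; rewrite (cardsD1 A) AI.
pose a := v (A, set0).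
have [ct hct] : exists ct : P -> R, a = \sum_(t in rem A) ct t * y t.
  apply: (HC I dI A AI Amax); exists (fun B => - v (B, set0)).
  move: hc; rewrite (aug_split hv) (bigD1 A) //= => /eqP; rewrite addr_eq0 => /eqP ->.
  rewrite -sumrN; apply: eq_big => B; first by rewrite in_setD1 andbC.
  by move=> _; rewrite mulNr.
pose wA := fun c : cell => if c.1 == A then
   \sum_(t in rem A) (if c.2 == [set t] then ct t else 0) else 0.
have hwA : supp_in (cellset I 1%N) wA.
  move=> [B T]; rewrite /wA /=; case: eqP => // -> nc.
  apply: big1 => t tA; case: eqP => // eT; move: nc.
  by rewrite eT inE /valid /= AI sub1set tA cards1.
have bwA : bdv wA (A, set0) = a.
  rewrite (top_split _ dI AI Amax hwA) dK_set0 hct [RHS]big_mkcond /=.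
  apply: eq_bigr => t _; rewrite /wA /= eqxx.
  rewrite (eq_bigr (fun t' => if t' == t then ct t' else 0)); last first.
    by move=> t' _; rewrite (inj_eq set1_inj) eq_sym.
  by rewrite sum_pick_in; case: ifP => _; rewrite ?mulr0 // mulrC.
pose v' := fun c => v c - bdv wA c.
have hv' : supp_in (cellset (I :\ A) 0%N) v'.
  move=> c nc; case cS: (c \in cellset I 0%N); last first.
    by rewrite /v' hv ?cS // (bdv_supp dI hwA) ?cS // subrr.
  have c1A : c.1 = A.
    by apply/eqP; apply: contraNT nc => h; apply: cellset_notA.
  case: c c1A cS {nc} => B T /= ->; rewrite inE /valid /= => /andP[_ /eqP /cards0_eq ->].
  by rewrite /v' bwA subrr.
have hc' : aug v' = 0.
  rewrite aug_sub hc aug_bdv ?subr0 // => c nz.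
  have : c \in cellset I 1 by apply: contraNT nz => h; rewrite hwA.
  rewrite inE /valid => /andP[/andP[_ sub] _]; exact: subset_trans sub (rem_sub _).
have [w' [hw'1 hw'2]] := IH (I :\ A) hI' dI' v' hv' hc'.
exists (fun c => wA c + w' c); split.
  move=> c nc; rewrite hwA // hw'1 ?add0r //; apply: contra nc.
  exact: (subsetP (cellset_sub I A _)).
by move=> c'; rewrite bdv_add -hw'2 /v' addrC subrK.
Qed.

End Core.

End HCore.
Import HCore.

Module HMono.
Set Implicit Arguments. Unset Strict Implicit. Unset Printing Implicit Defensive.
Import Order.TTheory GRing.Theory.
Local Open Scope ring_scope.
Section Mono.
Variables (K : fieldType) (N : nat).
Local Notation R := {mpoly K[N]}.

Lemma mcoeffMX0 (p : R) (m0 m : 'X_{1..N}) : ~~ (m0 <= m)%MM -> (p * 'X_[m0])@_m = 0.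
Proof.
move=> nle; apply/eqP; rewrite mcoeff_eq0; apply: contra nle.
rewrite (perm_mem (msuppMX p m0)) => /mapP[m' _ ->]; exact: lem_addr.
Qed.

Lemma mono_supp (J : finType) (S : {pred J}) (c : J -> R) (g : J -> 'X_{1..N}) m :
  m \in msupp (\sum_(j in S) c j * 'X_[g j]) -> exists2 j, j \in S & (g j <= m)%MM.
Proof.
move=> h; case: (boolP [exists j, (j \in S) && (g j <= m)%MM]).
  by case/existsP => j /andP[jS le]; exists j.
move/existsPn => nex; move: h; rewrite mcoeff_msupp raddf_sum /= big1 ?eqxx // => j jS.
by apply: mcoeffMX0; have := nex j; rewrite jS.
Qed.

Lemma var_ideal (J : finType) (S : {pred J}) (vi : J -> 'I_N) (f : R) :
  (forall m, m \in msupp f -> exists2 t, t \in S & (0 < m (vi t))%N) ->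
  exists c : J -> R, f = \sum_(t in S) c t * 'X_(vi t).
Proof.
move=> h; rewrite [f]mpolyE.
pose Q (g : R) := exists c : J -> R, g = \sum_(t in S) c t * 'X_(vi t).
have Q0 : Q 0 by exists (fun _ => 0); rewrite big1 // => t _; rewrite mul0r.
have QD : forall g1 g2, Q g1 -> Q g2 -> Q (g1 + g2).
  move=> g1 g2 [c1 ->] [c2 ->]; exists (fun t => c1 t + c2 t).
  by rewrite -big_split; apply: eq_bigr => t _; rewrite mulrDl.
rewrite big_seq; apply: (big_ind Q) => // m mS.
have [t tS lt] := h m mS.
exists (fun t' => if t' == t then f@_m *: 'X_[m - U_(vi t)] else 0).
rewrite (bigD1 t) //= eqxx big1 ?addr0; last by move=> t' /andP[_ /negbTE ->]; rewrite mul0r.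
rewrite -scalerAl -mpolyXD submK //; apply/mnm_lepP => i; rewrite mnm1E.
by case: eqP => [<-|]; rewrite ?lt.
Qed.

Lemma NZD_var (P : finType) (vi : P -> 'I_N) : injective vi ->
  NZDy (fun p => ('X_(vi p) : R)).
Proof.
move=> inj M m b mM [c hc]; apply: var_ideal => k kb.
have : (U_(vi m) + k)%MM \in msupp (\sum_(t in M) c t * 'X_[U_(vi t)]).
  by rewrite -hc mcoeff_msupp mulrC mcoeffMX -mcoeff_msupp.
case/mono_supp => t tM /mnm_lepP /(_ (vi t)); rewrite mnmDE !mnm1E eqxx.
rewrite (inj_eq inj); case: eqP => [e|_]; first by rewrite e tM in mM.
by exists t.
Qed.

End Mono.

Section Hibi.
Variables (K : fieldType) (N : nat) (P : finType) (xi yi : P -> 'I_N).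
Hypotheses (xinj : injective xi) (yinj : injective yi)
           (xy : forall p q, xi p != yi q).
Local Notation R := {mpoly K[N]}.
Definition xm p : R := 'X_(xi p).
Definition ym p : R := 'X_(yi p).
Definition um (A : {set P}) : R := \prod_(p in A) xm p * \prod_(p in ~: A) ym p.
Definition mu (A : {set P}) : 'X_{1..N} :=
  (\sum_(p in A) U_(xi p) + \sum_(p in ~: A) U_(yi p))%MM.

Lemma umE A : um A = 'X_[mu A].
Proof. by rewrite /um /mu mpolyXD /xm /ym !mprodXE. Qed.

Lemma mu_y A t : mu A (yi t) = (t \notin A).
Proof.
rewrite /mu mnmDE !mnm_sumE big1 ?add0n; last first.
  by move=> p _; rewrite mnm1E (negbTE (xy _ _)).
rewrite (eq_bigr (fun p => (p == t) : nat)); last by move=> p _; rewrite mnm1E (inj_eq yinj).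
case tA: (t \in A) => /=.
  by rewrite big1 // => p; rewrite inE; case: eqP => // ->; rewrite tA.
rewrite (bigD1 t) ?inE ?tA //= eqxx big1 // => p /andP[_ /negbTE ->].
by [].
Qed.

Lemma uxy_m (A : {set P}) t : t \in A -> ym t * um A = xm t * um (A :\ t).
Proof.
move=> tA; rewrite /um (bigD1 t tA) /= [X in _ = _ * (_ * X)](bigD1 t) /=; last by rewrite !inE eqxx.
have e1 : \prod_(p in A | p != t) xm p = \prod_(p in A :\ t) xm p.
  by apply: eq_bigl => p; rewrite !inE andbC.
have e2 : \prod_(p in ~: (A :\ t) | p != t) ym p = \prod_(p in ~: A) ym p.
  apply: eq_bigl => p; rewrite !inE negb_and negbK.
  by case: eqP => [->|] /=; rewrite ?tA ?andbF ?andbT.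
rewrite e1 e2; ring.
Qed.

Variable F : {set {set P}}.
Hypothesis Fcap : forall A B, A \in F -> B \in F -> A :&: B \in F.
Hypothesis Fsat : forall A C, A \in F -> C \in F -> C \proper A ->
  exists2 t, t \in A :\: C & A :\ t \in F.

Lemma colon_m : colonH F ym um.
Proof.
move=> I [IF Icl] A AI Amax a [c hc]; apply: var_ideal => k ka.
have : (mu A + k)%MM \in msupp (\sum_(B in I :\ A) c B * 'X_[mu B]).
  rewrite (eq_bigr (fun B => c B * um B)); last by move=> B _; rewrite umE.
  by rewrite -hc umE mcoeff_msupp mcoeffMX -mcoeff_msupp.
case/mono_supp => B; rewrite in_setD1 => /andP[nBA BI] le.
have AF := subsetP IF A AI; have BF := subsetP IF B BI.
have CF := Fcap AF BF.
have pr : A :&: B \proper A.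
  rewrite properEneq subsetIl andbT; apply/eqP => e.
  by move: nBA; rewrite (Amax B BI) ?eqxx // -e subsetIr.
have [t] := Fsat AF CF pr; rewrite !inE negb_and => /andP[/orP[ntA|ntB] tA] AtF.
  by rewrite tA in ntA.
exists t; first by rewrite inE tA AtF.
move/mnm_lepP: le => /(_ (yi t)); rewrite mnmDE !mu_y tA ntB /= add0n.
by [].
Qed.

End Hibi.

End HMono.
Import HMono.

Module HTrans.
Set Implicit Arguments. Unset Strict Implicit. Unset Printing Implicit Defensive.
Import Order.TTheory GRing.Theory.
Local Open Scope ring_scope.
Section Transport.
Variables (K : fieldType) (N : nat) (P : finType) (xi yi : P -> 'I_N).
Hypotheses (xinj : injective xi) (yinj : injective yi)
           (xy : forall p q, xi p != yi q).
Variable F : {set {set P}}.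
Hypothesis Fcap : forall A B, A \in F -> B \in F -> A :&: B \in F.
Hypothesis Fsat : forall A C, A \in F -> C \in F -> C \proper A ->
  exists2 t, t \in A :\: C & A :\ t \in F.
Variable I : {set {set P}}.
Hypothesis dI : dclosed F I.
Local Notation R := {mpoly K[N]}.
Variable J : R -> Prop.
Hypothesis hJ : forall f, J f <->
  exists c : {set P} -> R, f = \sum_(A in I) c A * um K xi yi A.

Local Notation x := (xm K xi).
Local Notation y := (ym K yi).
Local Notation u := (um K xi yi).
Local Notation CS i := (cellset F I i).

Definition gbT i := #|CS i|.
Definition ev i (k : 'I_(gbT i)) : cell P := enum_val k.
Definition fv i (v : 'rV[R]_(gbT i)) (c : cell P) : R :=
  \sum_k (if ev k == c then v 0 k else 0).

Lemma ev_in i k : ev (i := i) k \in CS i.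
Proof. exact: enum_valP. Qed.

Lemma fv_ev i v k : fv (i := i) v (ev k) = v 0 k.
Proof.
rewrite /fv (bigD1 k) //= eqxx big1 ?addr0 // => k' nk.
case: eqP => // /enum_val_inj e; by rewrite e eqxx in nk.
Qed.

Lemma fv_supp i v : supp_in (CS i) (fv (i := i) v).
Proof.
move=> c nc; apply: big1 => k _; case: eqP => // e.
by move: nc; rewrite -e ev_in.
Qed.

Lemma fv_row i (f : cell P -> R) : supp_in (CS i) f ->
  forall c, fv (i := i) (\row_k f (ev k)) c = f c.
Proof.
move=> hf c; case cS: (c \in CS i); last by rewrite fv_supp ?cS // hf ?cS.
have := enum_rankK_in cS cS; rewrite -/(ev _) => e.
by rewrite -{1}e fv_ev mxE e.
Qed.

Lemma sum_reindex i (v : 'rV[R]_(gbT i)) (g : cell P -> R) :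
  \sum_k v 0 k * g (ev k) = \sum_c fv v c * g c.
Proof.
rewrite /fv; under [RHS]eq_bigr do rewrite mulr_suml.
rewrite exchange_big; apply: eq_bigr => k _.
rewrite -(sum_if_eq (ev k) (v 0 k) g); apply: eq_bigr => c _.
by rewrite eq_sym.
Qed.

Definition geps : 'M[R]_(gbT 0, 1) := \matrix_(k, j) u (ev k).1.
Definition gdT i : 'M[R]_(gbT i.+1, gbT i) := \matrix_(k, l) bd x y (ev k) (ev l).

Lemma mul_gd i (w : 'rV[R]_(gbT i.+1)) c :
  fv (w *m gdT i) c = bdv x y (fv w) c.
Proof.
case cS: (c \in CS i); last first.
  by rewrite fv_supp ?cS // (bdv_supp x y Fcap dI (@fv_supp i.+1 w)) ?cS.
have := enum_rankK_in cS cS; rewrite -/(ev _) => e.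
rewrite -e fv_ev mxE /bdv -sum_reindex; apply: eq_bigr => k _.
by rewrite mxE.
Qed.

Lemma mul_geps (v : 'rV[R]_(gbT 0)) : (v *m geps) 0 0 = aug u (fv v).
Proof.
by rewrite mxE /aug -sum_reindex; apply: eq_bigr => k _; rewrite mxE.
Qed.

Lemma fv0 i c : fv (i := i) 0 c = 0.
Proof. by apply: big1 => k _; rewrite mxE; case: ifP. Qed.

Lemma rowE i (v w : 'rV[R]_(gbT i)) : (forall c, fv v c = fv w c) -> v = w.
Proof. by move=> h; apply/rowP => k; rewrite -!fv_ev h. Qed.

Lemma homog_bd c c' : homog_of 1 (bd x y c c').
Proof.
rewrite /homog_of; apply: rpred_sum => t _.
rewrite -[1%N]add0n; apply: dhomogM.
  have hm1 : (-1 : R) \is 0.-homog by rewrite rpredN; apply: dhomog1.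
  by move: (dhomogMn (cnt t c.2) hm1); rewrite mul0n.
apply: rpredB; case: ifP => _; rewrite ?rpred0 // /xm /ym dhomogX; apply/eqP; exact: mdeg1.
Qed.

Lemma mcoeff0_bd c c' : (bd x y c c')@_0 = 0.
Proof.
rewrite raddf_sum /=; apply: big1 => t _.
rewrite rmorphM /= mcoeffB; case: ifP => _; case: ifP => _;
  by rewrite /xm /ym ?mcoeff0 ?mcoeffX ?mnm1_eq0 ?subrr ?subr0 ?sub0r ?oppr0 ?mulr0.
Qed.

Lemma homog_u A : homog_of #|P| (u A).
Proof.
rewrite /homog_of umE dhomogX; apply/eqP; change (mdeg (mu xi yi A) = #|P|).
rewrite /mu mdegD !mdeg_sum.
rewrite (eq_bigr (fun _ => 1%N)); last by move=> p _; rewrite mdeg1.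
rewrite [X in (_ + X)%N](eq_bigr (fun _ => 1%N)); last by move=> p _; rewrite mdeg1.
by rewrite !sum1_card cardsC.
Qed.

Lemma exists_res : has_linear_min_res J.
Proof.
pose ga := fun i (_ : 'I_(gbT i)) => (#|P| + i)%N.
have NZD : NZDy y by exact: NZD_var yinj.
have HC : colonH F y u.
  have := @colon_m K N P xi yi yinj xy F Fcap Fsat. exact.
have uxy : forall (A : {set P}) t, t \in A -> y t * u A = x t * u (A :\ t).
  by move=> A t; apply: uxy_m.
have h1 : forall k : 'I_(gbT 0), homog_of (ga 0 k) (geps k ord0).
  by move=> k; rewrite /geps mxE /ga addn0; exact: homog_u.
have h2 : forall i (k : 'I_(gbT i.+1)) (l : 'I_(gbT i)), gdT i k l = 0 \/
     ((ga i l <= ga i.+1 k)%N /\ homog_of (ga i.+1 k - ga i l) (gdT i k l)).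
  move=> i k l; right; rewrite /ga addnS leqnSn subSn // subnn /gdT mxE.
  split => //; exact: homog_bd.
have h3 : forall f, J f <-> exists v : 'rV[R]_(gbT 0), f = (v *m geps) ord0 ord0.
  move=> f; rewrite hJ; split.
    case=> c ->.
    pose f0 := fun c0 : cell P => if c0 \in CS 0 then c c0.1 else 0.
    have hf0 : supp_in (CS 0) f0 by move=> c0 /negbTE; rewrite /f0 => ->.
    exists (\row_k f0 (ev k)); rewrite mul_geps (aug_split _ (@fv_supp 0 _)).
    apply: eq_bigr => B BI; rewrite fv_row // /f0 inE /valid /= BI sub0set cards0.
    by [].
  case=> v ->; exists (fun B => fv v (B, set0)).
  by rewrite mul_geps (aug_split _ (@fv_supp 0 _)).
have h4 : forall v : 'rV[R]_(gbT 0),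
    v *m geps = 0 <-> exists w : 'rV[R]_(gbT 1), v = w *m gdT 0.
  move=> v; split.
    move=> h; have ha : aug u (fv v) = 0.
      by rewrite -mul_geps h mxE.
    have [wf [hw1 hw2]] := exact_zero Fcap uxy HC (leqnn #|I|) dI (@fv_supp 0 v) ha.
    exists (\row_k wf (ev k)); apply: rowE => c.
    by rewrite mul_gd hw2; apply: bdv_ext => c0; rewrite fv_row.
  case=> w ->; apply/matrixP => i j; rewrite !ord1 mul_geps [RHS]mxE.
  rewrite (aug_ext _ (mul_gd w)) aug_bdv // => c nz.
  have : c \in CS 1%N by apply: contraNT nz => h; rewrite fv_supp.
  by rewrite inE /valid => /andP[/andP[_ sub] _]; apply: subset_trans sub (rem_sub _ _).
have h5 : forall i (v : 'rV[R]_(gbT i.+1)),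
    v *m gdT i = 0 <-> exists w : 'rV[R]_(gbT i.+2), v = w *m gdT i.+1.
  move=> i v; split.
    move=> h.
    have hc : forall c', c' \in CS i -> bdv x y (fv v) c' = 0.
      by move=> c' _; rewrite -mul_gd h fv0.
    have [wf [hw1 hw2]] := exact_pos Fcap NZD (leqnn #|I|) dI (@fv_supp i.+1 v) hc.
    exists (\row_k wf (ev k)); apply: rowE => c.
    by rewrite mul_gd hw2; apply: bdv_ext => c0; rewrite fv_row.
  case=> w ->; apply: rowE => c; rewrite fv0 mul_gd.
  by rewrite (bdv_ext _ _ _ (mul_gd w)) bdv_bdv.
exists (GFR h1 h2 h3 h4 h5); split.
  by move=> i k l /=; rewrite /gdT mxE mcoeff0_bd.
by exists #|P|.
Qed.

End Transport.

End HTrans.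
Import HTrans.

Module HLat.
Set Implicit Arguments. Unset Strict Implicit. Unset Printing Implicit Defensive.
Import Order.TTheory GRing.Theory.
Section Lat.
Context {disp : Order.disp_t} (L : finTBDistrLatticeType disp).
Local Open Scope order_scope.
Implicit Types (q r z : L).

Definition rkL (z : L) : nat := #|[set w : L | w <= z]|.

Lemma rkL_lt z z' : z < z' -> (rkL z < rkL z')%N.
Proof.
move=> lt; apply: proper_card; apply/properP; split.
  by apply/subsetP => w; rewrite !inE => h; apply: le_trans h (ltW lt).
by exists z'; rewrite !inE ?lexx // (lt_geF lt).
Qed.

Lemma cover_exists (w t : L) : w < t -> exists c, lower_nb c t && (w <= c).
Proof.
move=> wt.
have P0 : [pred z | (w <= z) && (z < t)] w by rewrite /= lexx wt.
case: (arg_maxnP rkL P0) => c /= /andP[wc ct] cmax.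
exists c; rewrite wc andbT /lower_nb ct /=; apply/forallP => r.
apply/negP => /andP[cr rt].
have := cmax r; rewrite (le_trans wc (ltW cr)) rt => /(_ isT).
by rewrite leqNgt rkL_lt.
Qed.

Lemma JI_cover (t : L) : join_irr t ->
  exists c, lower_nb c t /\ forall c', lower_nb c' t -> c' = c.
Proof.
rewrite /join_irr => /cards1P [c hc]; exists c; split.
  have : c \in [set c0 | lower_nb c0 t] by rewrite hc inE.
  by rewrite inE.
move=> c' h; have : c' \in [set c0 | lower_nb c0 t] by rewrite inE.
by rewrite hc inE => /eqP.
Qed.

Lemma below_cover (t : L) : join_irr t ->
  exists c, lower_nb c t /\ forall w, w < t -> w <= c.
Proof.
move=> jt; have [c [hc uc]] := JI_cover jt; exists c; split => // w wt.
by have [c' /andP[hc' wc']] := cover_exists wt; rewrite -(uc c' hc').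
Qed.

Lemma JI_nbot (t : L) : join_irr t -> t != \bot.
Proof.
move=> jt; have [c [/andP[ct _] _]] := JI_cover jt.
by apply/eqP => e; rewrite e ltx0 in ct.
Qed.

Lemma join_prime (t a b : L) : join_irr t -> t <= a `|` b -> (t <= a) || (t <= b).
Proof.
move=> jt tab; case: (boolP (t <= a)) => //= na; apply/negPn/negP => nb.
have [c [/andP[ct _] hc]] := below_cover jt.
have ha : t `&` a < t.
  rewrite lt_neqAle leIl andbT; apply: contra na => /eqP e.
  by rewrite -e leIr.
have hb : t `&` b < t.
  rewrite lt_neqAle leIl andbT; apply: contra nb => /eqP e.
  by rewrite -e leIr.
have : t <= c by rewrite -(meet_l tab) meetUr leUx !hc.
by rewrite (lt_geF ct).
Qed.

Local Notation JIL := (JI L).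

Lemma join_prime_big (X : {set JIL}) (t : L) : join_irr t ->
  t <= \join_(s in X) val s -> exists2 s, s \in X & t <= val s.
Proof.
move=> jt; apply: (big_ind (fun z => t <= z -> exists2 s, s \in X & t <= val s)).
- by rewrite lex0 => /eqP e; move: (JI_nbot jt); rewrite e eqxx.
- move=> z1 z2 h1 h2 /(join_prime jt) /orP[/h1|/h2] //.
- by move=> s sX ts; exists s.
Qed.

Lemma separate (q r : L) : ~~ (q <= r) ->
  exists p : JIL, (val p <= q) && ~~ (val p <= r).
Proof.
move=> nqr.
have P0 : [pred z | (z <= q) && ~~ (z <= r)] q by rewrite /= lexx nqr.
case: (arg_minnP rkL P0) => p0 /= /andP[p0q p0r] pmin.
have below : forall z, z < p0 -> z <= r.
  move=> z zp; apply/negPn/negP => nz.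
  have := pmin z; rewrite (le_trans (ltW zp) p0q) nz => /(_ isT).
  by rewrite leqNgt rkL_lt.
have nb : p0 != \bot by apply: contra p0r => /eqP ->; rewrite le0x.
have [c1 /andP[hc1 _]] : exists c, lower_nb c p0 && (\bot <= c).
  by apply: cover_exists; rewrite lt0x.
have ji : join_irr p0.
  rewrite /join_irr; apply/cards1P; exists c1; apply/setP => c2; rewrite !inE.
  apply/idP/eqP => [h2|->//]; case: (eqVneq c2 c1) => // ne; exfalso.
  move: (hc1) (h2) => /andP[c1p /forallP f1] /andP[c2p /forallP f2].
  have j1 : c1 < c1 `|` c2.
    rewrite lt_neqAle leUl andbT; apply/negP => /eqP e.
    have c21 : c2 < c1 by rewrite lt_neqAle ne /= e leUr.
    by have := f2 c1; rewrite c21 c1p.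
  have e : c1 `|` c2 = p0.
    have : c1 `|` c2 <= p0 by rewrite leUx !ltW.
    rewrite le_eqVlt => /orP[/eqP //|lt].
    by have := f1 (c1 `|` c2); rewrite j1 lt.
  have : p0 <= r by rewrite -e leUx !below.
  by rewrite (negbTE p0r).
by exists (exist _ p0 ji); rewrite /= p0q.
Qed.

Definition ell (q : L) : {set JIL} := [set p : JIL | val p <= q].

Lemma ell_sub q r : (ell q \subset ell r) = (q <= r).
Proof.
apply/idP/idP => [sub|qr].
  apply/negPn/negP => /separate [p /andP[pq pr]].
  by move: (subsetP sub p); rewrite !inE pq (negbTE pr) => /(_ isT).
by apply/subsetP => p; rewrite !inE => h; apply: le_trans h qr.
Qed.

Lemma ell_inj : injective ell.
Proof. by move=> q r e; apply: le_anti; rewrite -!ell_sub e subxx. Qed.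

Lemma ell_meet q r : ell (q `&` r) = ell q :&: ell r.
Proof. by apply/setP => p; rewrite !inE lexI. Qed.

Lemma ell_join q r : ell (q `|` r) = ell q :|: ell r.
Proof.
apply/setP => p; rewrite !inE; apply/idP/idP.
  exact: join_prime (valP p).
by case/orP => h; [apply: le_trans h (leUl _ _) | apply: le_trans h (leUr _ _)].
Qed.

Lemma ell_down (X : {set JIL}) :
  (forall p s : JIL, s \in X -> val p <= val s -> p \in X) ->
  ell (\join_(s in X) val s) = X.
Proof.
move=> dX; apply/setP => p; rewrite inE; apply/idP/idP.
  by case/(join_prime_big (valP p)) => s sX ps; apply: dX sX ps.
by move=> pX; apply: joins_sup.
Qed.

Definition FL := [set ell z | z : L].
Definition FLc := [set ~: ell z | z : L].

Lemma FL_cap A B : A \in FL -> B \in FL -> A :&: B \in FL.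
Proof.
by move=> /imsetP[q _ ->] /imsetP[r _ ->]; rewrite -ell_meet; apply/imsetP; exists (q `&` r).
Qed.

Lemma FLc_cap A B : A \in FLc -> B \in FLc -> A :&: B \in FLc.
Proof.
by move=> /imsetP[q _ ->] /imsetP[r _ ->]; rewrite -setCU -ell_join; apply/imsetP; exists (q `|` r).
Qed.

Lemma FL_sat A C : A \in FL -> C \in FL -> C \proper A ->
  exists2 t, t \in A :\: C & A :\ t \in FL.
Proof.
move=> /imsetP[q _ ->] /imsetP[r _ ->] /properP[_ [t0 t0q t0r]].
have P0 : [pred t | t \in ell q :\: ell r] t0 by rewrite /= inE t0q t0r.
case: (arg_maxnP (fun t : JIL => rkL (val t)) P0) => t /= tin tmax.
exists t => //; apply/imsetP; exists (\join_(s in ell q :\ t) val s) => //.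
apply/esym/ell_down => p s; rewrite !inE => /andP[nst sq] ps.
rewrite (le_trans ps sq) andbT; apply/eqP => ept; subst p.
have ts : val t < val s by rewrite lt_neqAle ps andbT (inj_eq val_inj) eq_sym.
move: tin; rewrite !inE => /andP[tr tq].
have sr : ~~ (val s <= r) by apply: contra tr => sr; apply: le_trans ps sr.
have := tmax s; rewrite !inE sr sq => /(_ isT).
by rewrite leqNgt rkL_lt.
Qed.

Lemma FLc_sat A C : A \in FLc -> C \in FLc -> C \proper A ->
  exists2 t, t \in A :\: C & A :\ t \in FLc.
Proof.
move=> /imsetP[q _ ->] /imsetP[r _ ->].
rewrite properC => /properP[_ [t0 t0r t0q]].
have P0 : [pred t | t \in ell r :\: ell q] t0 by rewrite /= inE t0q t0r.
case: (arg_minnP (fun t : JIL => rkL (val t)) P0) => t /= tin tmin.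
exists t; first by move: tin; rewrite !inE negbK andbC.
apply/imsetP; exists (\join_(s in t |: ell q) val s) => //.
rewrite ell_down; first by apply/setP => z; rewrite !inE negb_or.
move=> p s; rewrite !inE => /orP[/eqP ->|sq] ps; last by rewrite (le_trans ps sq) orbT.
case pq: (val p <= q); first by rewrite orbT.
move: tin; rewrite !inE => /andP[tq tr].
have pr : val p <= r := le_trans ps tr.
have := tmin p; rewrite !inE pq pr => /(_ isT) le.
case: (eqVneq p t) => // npt; exfalso.
have pt : val p < val t by rewrite lt_neqAle ps andbT (inj_eq val_inj).
by move: le; rewrite leqNgt rkL_lt.
Qed.

End Lat.

End HLat.
Import HLat.

Module HFinal.
Set Implicit Arguments. Unset Strict Implicit. Unset Printing Implicit Defensive.
Import Order.TTheory GRing.Theory.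
Local Open Scope ring_scope.
Section Final.
Context (K : fieldType) {disp : Order.disp_t} (L : finTBDistrLatticeType disp).
Local Notation n := (nJI L).

Definition xi0 (p : JI L) : 'I_(n + n) := lshift n (enum_rank p).
Definition yi0 (p : JI L) : 'I_(n + n) := rshift n (enum_rank p).

Lemma xi0_inj : injective xi0.
Proof. by move=> p q /lshift_inj /enum_rank_inj. Qed.

Lemma yi0_inj : injective yi0.
Proof. by move=> p q /rshift_inj /enum_rank_inj. Qed.

Lemma xy0 p q : xi0 p != yi0 q.
Proof. by rewrite /xi0 /yi0 eq_lrshift. Qed.

Lemma yx0 p q : yi0 p != xi0 q.
Proof. by rewrite /xi0 /yi0 eq_rlshift. Qed.

Lemma u_ell q : um K xi0 yi0 (ell q) = u_mon K q.
Proof.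
rewrite /um /u_mon; congr (_ * _); apply: eq_bigl => p; by rewrite !inE.
Qed.

Lemma u_cell q : um K yi0 xi0 (~: ell q) = u_mon K q.
Proof.
rewrite /um /u_mon setCK mulrC; congr (_ * _); apply: eq_bigl => p; by rewrite !inE.
Qed.

Lemma final_gen (g : L -> {set JI L}) (ginj : injective g)
  (xi yi : JI L -> 'I_(n + n)) (yinj : injective yi)
  (xy : forall p q, xi p != yi q)
  (hu : forall q, um K xi yi (g q) = u_mon K q)
  (F : {set {set JI L}})
  (Fcap : forall A B, A \in F -> B \in F -> A :&: B \in F)
  (Fsat : forall A C, A \in F -> C \in F -> C \proper A ->
     exists2 t, t \in A :\: C & A :\ t \in F)
  (I : {set L}) (dI : dclosed F (g @: I)) :
  has_linear_min_res (in_H K I).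
Proof.
apply: (exists_res yinj xy Fcap Fsat dI) => f; split.
  case=> c ->; exists (fun A => \sum_(q | g q == A) c q).
  rewrite big_imset /=; last by move=> q1 q2 _ _; apply: ginj.
  apply: eq_bigr => q _; rewrite hu; congr (_ * _).
  rewrite (big_pred1 q) // => q'; exact: (inj_eq ginj).
case=> c ->; exists (fun q => c (g q)).
rewrite big_imset /=; last by move=> q1 q2 _ _; apply: ginj.
by apply: eq_bigr => q _; rewrite hu.
Qed.

End Final.


End HFinal.
Import HFinal.

Theorem corollary3p2 (K : fieldType) (disp : Order.disp_t)
  (L : finTBDistrLatticeType disp) (I : {set L}) :
  poset_ideal I \/ poset_coideal I ->
  has_linear_min_res (in_H K I).
Proof.
case=> hI.
  apply: (@final_gen K disp L (@ell disp L) (@ell_inj disp L) (@xi0 disp L) (@yi0 disp L)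
     (@yi0_inj disp L) (@xy0 disp L) (@u_ell K disp L) (@FL disp L)
     (@FL_cap disp L) (@FL_sat disp L) I).
  split.
    by apply/subsetP => A /imsetP[q _ ->]; apply/imsetP; exists q.
  move=> A B /imsetP[q qI ->] /imsetP[r _ ->]; rewrite ell_sub => rq.
  by apply/imsetP; exists r => //; apply: hI rq qI.
have ginj : injective (fun q : L => ~: ell q).
  by move=> q r /setC_inj /ell_inj.
apply: (@final_gen K disp L (fun q : L => ~: ell q) ginj (@yi0 disp L) (@xi0 disp L)
   (@xi0_inj disp L) (@yx0 disp L) (@u_cell K disp L) (@FLc disp L)
   (@FLc_cap disp L) (@FLc_sat disp L) I).
split.
  by apply/subsetP => A /imsetP[q _ ->]; apply/imsetP; exists q.
move=> A B /imsetP[q qI ->] /imsetP[r _ ->]; rewrite setCS ell_sub => qr.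
by apply/imsetP; exists r => //; apply: hI qr qI.
Qed.
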